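(* Let $R$ be a $\Bbbk$-algebra, $\hbar\in Z(R)$ a regular central element, $R_0=R/\hbar R$ with projection $\theta:R\to R_0$, $R_0$ module-finite over $Z(R_0)$, and $\iota:R_0\to R$ a linear section of $\theta$ such that $[\iota(z),r]\in\hbar^NR$ for all $z\in Z(R_0)$, $r\in R$ and some positive integer $N$. Let $\partial_z(w)=\theta([\iota(z),\widetilde w]/\hbar^N)$ ($\widetilde w\in\theta^{-1}(w)$) and $\{z,z'\}=\partial_z(z')$ the resulting Poisson bracket on $Z(R_0)$. (1) If $C\subseteq Z(R_0)$ is a Poisson subalgebra for this bracket and $R_0$ is module-finite over $C$, then $R_0$ is a Poisson $C$-order via the restriction of $\partial$ to $C$. (2) If moreover the restriction $\iota|_C:C\to R$ is an algebra homomorphism, then $\partial_{zz'}(w)=z\,\partial_{z'}(w)+z'\,\partial_z(w)$ for all $z,z'\in C$, $w\in R_0$.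
   Context: $\Bbbk$ is a field, $[r,r']=rr'-r'r$. A Poisson $C$-order is an algebra $A$ module-finite over a central subalgebra $C$ with a linear map $\partial:C\to\mathrm{Der}(A/C)$ (derivations of $A$ preserving $C$) such that $\{z,z'\}=\partial_z(z')$ makes $C$ a Poisson algebra. The map $\partial$ above is well defined and makes $R_0$ a Poisson $Z(R_0)$-order. *)

(* Defs.v *)
From HB Require Import structures.
From mathcomp Require Import all_boot all_order all_algebra.
Set Implicit Arguments. Unset Strict Implicit. Unset Printing Implicit Defensive.
Import GRing.Theory.
Local Open Scope ring_scope.

Definition commr {R : pzRingType} (x y : R) : R := x * y - y * x.

Definition in_center {R : pzRingType} (z : R) : Prop := forall a : R, z * a = a * z.

Definition is_subalgebra {k : fieldType} {A : algType k} (C : A -> Prop) : Prop :=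
  [/\ C 0, C 1, (forall x y, C x -> C y -> C (x + y)),
      (forall (a : k) x, C x -> C (a *: x)) &
      (forall x y, C x -> C y -> C (x * y))].

Definition module_finite {A : pzRingType} (C : A -> Prop) : Prop :=
  exists s : seq A, forall a : A, exists c : 'I_(size s) -> A,
    (forall i, C (c i)) /\ a = \sum_(i < size s) c i * s`_i.

Definition is_derivation {k : fieldType} {A : algType k} (D : A -> A) : Prop :=
  (forall (a : k) x y, D (a *: x + y) = a *: D x + D y) /\
  (forall x y, D (x * y) = D x * y + x * D y).

(* Poisson C-order: A is module-finite over a central subalgebra C, and
   D : C -> Der(A/C) (derivations of A preserving C) is k-linear, such that
   {z, z'} := D z z' makes C a Poisson algebra. *)
Definition poisson_order {k : fieldType} {A : algType k} (C : A -> Prop)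
    (D : A -> A -> A) : Prop :=
  [/\ is_subalgebra C /\ (forall z, C z -> in_center z),
      module_finite C,
      (forall z, C z -> is_derivation (D z) /\ (forall c, C c -> C (D z c))),
      (forall (a : k) z z', C z -> C z' ->
          forall w, D (a *: z + z') w = a *: D z w + D z' w) &
      [/\ (forall z, C z -> D z z = 0),
          (forall x y z, C x -> C y -> C z ->
             D x (D y z) + D y (D z x) + D z (D x y) = 0) &
          (forall x y z, C x -> C y -> C z ->
             D x (y * z) = D x y * z + y * D x z)]].

(* Main.v *)
Require Import Defs.
From HB Require Import structures.
From mathcomp Require Import all_boot all_order all_algebra.
Import GRing.Theory.
Local Open Scope ring_scope.

Section Aux.
Variables (k : fieldType) (R : algType k).
Implicit Types (X Y Z r s : R).

Lemma commrDZ (a : k) X r r' : commr X (a *: r + r') = a *: commr X r + commr X r'.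
Proof. by rewrite /commr mulrDr mulrDl -scalerAr -scalerAl scalerBr opprD addrACA. Qed.

Lemma commrDZl (a : k) X Y r : commr (a *: X + Y) r = a *: commr X r + commr Y r.
Proof. by rewrite /commr mulrDl mulrDr -scalerAl -scalerAr scalerBr opprD addrACA. Qed.

Lemma commrM X r r' : commr X (r * r') = commr X r * r' + r * commr X r'.
Proof. by rewrite /commr mulrBr mulrBl !mulrA addrA subrK. Qed.

Lemma commrMl X Y r : commr (X * Y) r = X * commr Y r + commr X r * Y.
Proof. by rewrite /commr mulrBr mulrBl !mulrA addrA subrK. Qed.

Lemma zmod_jac (V : zmodType) (a b c d e f : V) :
  (a - b - (c - d)) + (c - e - (f - b)) + (f - d - (a - e)) = 0.
Proof.
rewrite !opprB !addrA.
rewrite [a - b + d - c + c]subrK [a - b + d - e + b - f + f]subrK.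
rewrite (addrAC _ (-b)) (addrAC _ (-b)) subrK.
by rewrite (addrAC _ (-e)) addrK subrK subrr.
Qed.

Lemma jacobi X Y Z :
  commr X (commr Y Z) + commr Y (commr Z X) + commr Z (commr X Y) = 0.
Proof. by rewrite /commr !(mulrBr, mulrBl) !mulrA zmod_jac. Qed.

End Aux.

Theorem corollary2p5 (k : fieldType) (R R0 : algType k) (hbar : R)
  (theta : {lrmorphism R -> R0}) (iota : {linear R0 -> R}) (N : nat)
  (partial : R0 -> R0 -> R0) (C : R0 -> Prop) :
  (* hbar is a regular central element *)
  in_center hbar -> (forall r : R, hbar * r = 0 -> r = 0) ->
  (* R0 = R / hbar R with projection theta *)
  (forall w : R0, exists r : R, theta r = w) ->
  (forall r : R, theta r = 0 <-> exists s : R, r = hbar * s) ->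
  (* R0 module-finite over Z(R0) *)
  module_finite (@in_center R0) ->
  (* iota is a linear section of theta *)
  (forall w : R0, theta (iota w) = w) ->
  (0 < N)%N ->
  (forall (z : R0) (r : R), in_center z ->
     exists s : R, commr (iota z) r = hbar ^+ N * s) ->
  (* partial_z(w) = theta([iota z, w~] / hbar^N) *)
  (forall (z w : R0) (r s : R), in_center z -> theta r = w ->
     commr (iota z) r = hbar ^+ N * s -> partial z w = theta s) ->
  (* C is a Poisson subalgebra of Z(R0), R0 module-finite over C *)
  is_subalgebra C -> (forall z, C z -> in_center z) ->
  (forall z z', C z -> C z' -> C (partial z z')) ->
  module_finite C ->
  poisson_order C partial /\
  ((forall z z', C z -> C z' -> iota (z * z') = iota z * iota z') ->
   iota 1 = 1 ->
   forall (z z' w : R0), C z -> C z' ->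
     partial (z * z') w = z * partial z' w + z' * partial z w).
Proof.
move=> hc hreg surj ker mfZ sect Npos Hcomm Hpart subC Ccen Cclos mfC.
have hNc0 : forall n a, hbar ^+ n * a = a * hbar ^+ n.
  elim=> [|n IH] a; first by rewrite expr0 mul1r mulr1.
  by rewrite exprS -mulrA IH mulrA hc -mulrA.
have hNc := hNc0 N.
have hNreg : forall n r, hbar ^+ n * r = 0 -> r = 0.
  elim=> [|n IH] r; first by rewrite expr0 mul1r.
  by rewrite exprS -mulrA => /hreg /IH.
have key : forall z r, in_center z -> exists s,
    commr (iota z) r = hbar ^+ N * s /\ partial z (theta r) = theta s.
  move=> z r zc; case: (Hcomm z r zc) => s Hs; exists s; split => //.
  exact: Hpart zc erefl Hs.
have commrhN : forall X s, commr X (hbar ^+ N * s) = hbar ^+ N * commr X s.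
  by move=> X s; rewrite /commr mulrBr !mulrA (hNc X).
case: subC => [C0 C1 CD CZ CM].
have der : forall z, in_center z -> is_derivation (partial z).
  move=> z zc; split.
  - move=> a w w'; case: (surj w) => r <-; case: (surj w') => r' <-.
    case: (key z r zc) => s [Hs ->]; case: (key z r' zc) => s' [Hs' ->].
    rewrite (Hpart z _ (a *: r + r') (a *: s + s') zc) ?linearP //.
    by rewrite commrDZ Hs Hs' mulrDr scalerAr.
  - move=> w w'; case: (surj w) => r <-; case: (surj w') => r' <-.
    case: (key z r zc) => s [Hs ->]; case: (key z r' zc) => s' [Hs' ->].
    rewrite (Hpart z _ (r * r') (s * r' + r * s') zc) ?rmorphD ?rmorphM //.
    rewrite commrM Hs Hs' mulrDr -!mulrA; congr (_ + _).
    by rewrite !mulrA hNc.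
split.
  split => //. all: try (split; [by split|exact: Ccen]).
  - by move=> z Cz; split; [exact: der (Ccen z Cz) | move=> c Cc; exact: Cclos].
  - move=> a z z' Cz Cz' w; case: (surj w) => r <-.
    case: (key z r (Ccen z Cz)) => s [Hs ->].
    case: (key z' r (Ccen z' Cz')) => s' [Hs' ->].
    rewrite (Hpart (a *: z + z') _ r (a *: s + s')) ?linearP //.
      exact: Ccen (CD _ _ (CZ _ _ Cz) Cz').
    by rewrite commrDZl Hs Hs' mulrDr scalerAr.
  split.
  - move=> z Cz; have := Hpart z z (iota z) 0 (Ccen z Cz) (sect z).
    rewrite raddf0; apply; by rewrite /commr subrr mulr0.
  - move=> x y z Cx Cy Cz.
    have [syz [Hyz Pyz]] := key y (iota z) (Ccen y Cy).
    have [szx [Hzx Pzx]] := key z (iota x) (Ccen z Cz).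
    have [sxy [Hxy Pxy]] := key x (iota y) (Ccen x Cx).
    rewrite !sect in Pyz Pzx Pxy; rewrite Pyz Pzx Pxy.
    have [t1 [H1 ->]] := key x syz (Ccen x Cx).
    have [t2 [H2 ->]] := key y szx (Ccen y Cy).
    have [t3 [H3 ->]] := key z sxy (Ccen z Cz).
    rewrite -!rmorphD.
    suff -> : t1 + t2 + t3 = 0 by rewrite rmorph0.
    apply: (hNreg N); apply: (hNreg N).
    by rewrite !mulrDr -H1 -H2 -H3 -!commrhN -Hyz -Hzx -Hxy jacobi.
  - by move=> x y z Cx Cy Cz; apply: (der x (Ccen x Cx)).2.
move=> iM i1 z z' w Cz Cz'; case: (surj w) => r <-.
case: (key z r (Ccen z Cz)) => s [Hs ->].
case: (key z' r (Ccen z' Cz')) => s' [Hs' ->].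
rewrite (Hpart (z * z') _ r (iota z * s' + s * iota z')) //.
- rewrite rmorphD !rmorphM (Ccen z' Cz'); congr (_ * _ + _ * _); exact: sect.
- exact: Ccen (CM _ _ Cz Cz').
by rewrite iM // commrMl Hs Hs' mulrDr !mulrA (hNc (iota z)).
Qed.
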